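(* Consider agent $i$ with $N_i$ neighbors $j\in\mathcal N_i$, and functions $f_i:W\times W^{N_i}\to\mathbb{R}^2$ ($W\subseteq\mathbb{R}^2$) satisfying $\|f_i(x,\bar x)\|\le M$, $\|f_i(x,\bar x)-f_i(y,\bar x)\|\le L_i\|x-y\|$ and $\|f_i(x,\bar x)-f_i(x,\bar y)\|\le \bar L_i\|\bar x-\bar y\|$ for all $x,y\in W$, $\bar x,\bar y\in W^{N_i}$, with $L_i,\bar L_i>0$. Fix $x_{\mathrm{des}}\in\mathbb{R}^2$ and set $g_i(e,\bar x,u)=f_i(e+x_{\mathrm{des}},\bar x)+u$. Let $t_{k_z}\in\mathbb{R}$, $T_z>0$, and let $u_i:[t_{k_z},t_{k_z}+T_z]\to\mathbb{R}^2$ be piecewise continuous with $\|u_i(s)\|\le u_{\max}$. Let $\bar x_i(\cdot)$ be the actual trajectory of the neighbors' stacked positions and $\hat{\bar x}_i(\cdot)$ a predicted one, both in $W^{N_i}$, such that each neighbor's actual and predicted positions satisfy $\|x_j(s)-\hat x_j(s)\|\le 2\sqrt3R$ for all $s$ and $j\in\mathcal N_i$, where $R>0$ is the side length of the hexagonal cells. Let $e_i(\cdot)$ solve $\dot e_i=g_i(e_i,\bar x_i(s),u_i(s))$ and $\hat e_i(\cdot)$ solve $\dot{\hat e}_i=g_i(\hat e_i,\hat{\bar x}_i(s),u_i(s))$ on $[t_{k_z},t_{k_z}+T_z]$, with the same initial value $\hat e_i(t_{k_z})=e_i(t_{k_z})$ (and $e_i+x_{\mathrm{des}},\hat e_i+x_{\mathrm{des}}\in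 W$). Then for every $s\in[t_{k_z},t_{k_z}+T_z]$, $$\|e_i(s)-\hat e_i(s)\|\le \rho_i(s-t_{k_z}),$$ where $$\rho_i(y)=\min\Big\{\widetilde\rho_i\big[e^{L_iy}-1\big],\ 2\|e_i(t_{k_z})\|+2y(M+u_{\max})\Big\},\qquad \widetilde\rho_i=\frac{2\sqrt3 R\,\bar L_i N_i}{L_i}.$$
   Context: $\|\cdot\|$ denotes the Euclidean norm; $\bar x\in W^{N_i}\subseteq\mathbb{R}^{2N_i}$ is the stacked vector of the $N_i$ neighbors' positions and its norm is the Euclidean norm on $\mathbb{R}^{2N_i}$. *)

(* Defs.v *)
From Stdlib Require Import Reals Lra List.
From Coquelicot Require Import Coquelicot.
Open Scope R_scope.

Definition vec2 := (R * R)%type.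
Definition vadd (x y : vec2) : vec2 := (fst x + fst y, snd x + snd y).
Definition vsub (x y : vec2) : vec2 := (fst x - fst y, snd x - snd y).
Definition norm2 (x : vec2) : R := sqrt (fst x ^ 2 + snd x ^ 2).

(* Stacked neighbor positions: entries 0..N-1 of a function nat -> vec2.
   Euclidean norm on R^(2N) of the stacked vector. *)
Definition sumN (N : nat) (f : nat -> R) : R :=
  fold_right Rplus 0 (map f (seq 0 N)).
Definition stack_norm (N : nat) (xb : nat -> vec2) : R :=
  sqrt (sumN N (fun j => norm2 (xb j) ^ 2)).
Definition stack_sub (xb yb : nat -> vec2) : nat -> vec2 :=
  fun j => vsub (xb j) (yb j).
Definition inWN (W : vec2 -> Prop) (N : nat) (xb : nat -> vec2) : Prop :=
  forall j, (j < N)%nat -> W (xb j).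

Definition piecewise_continuous (u : R -> vec2) (a b : R) : Prop :=
  exists (n : nat) (p : nat -> R),
    p 0%nat = a /\ p n = b /\
    (forall k, (k < n)%nat -> p k < p (S k)) /\
    (forall k, (k < n)%nat ->
       (forall s, p k < s < p (S k) -> continuous u s) /\
       (exists l : vec2, filterlim u (at_right (p k)) (locally l)) /\
       (exists l : vec2, filterlim u (at_left (p (S k))) (locally l))).

(* e is a (Carathéodory / integral-form) solution of de/ds = G s (e s) on [a,b]:
   for every s in [a,b], e(s) - e(a) is the Riemann integral of G t (e t)
   over [a,s], componentwise. *)
Definition is_solution (G : R -> vec2 -> vec2) (e : R -> vec2) (a b : R) : Prop :=
  forall s, a <= s <= b ->
    is_RInt (fun t => fst (G t (e t))) a s (fst (e s) - fst (e a)) /\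
    is_RInt (fun t => snd (G t (e t))) a s (snd (e s) - snd (e a)).

(* Main.v *)
Require Import Defs.
From Stdlib Require Import Reals Lra Lia Psatz List.
From Coquelicot Require Import Coquelicot.
Open Scope R_scope.

Lemma sqrt_le_sq x y : 0 <= y -> x <= y ^ 2 -> sqrt x <= y.
Proof. intros Hy Hx. rewrite <- (sqrt_pow2 y Hy). apply sqrt_le_1_alt; lra. Qed.

Lemma norm2_ge0 x : 0 <= norm2 x.
Proof. apply sqrt_pos. Qed.

Lemma dot_le a1 a2 b1 b2 :
  a1*b1 + a2*b2 <= norm2 (a1,a2) * norm2 (b1,b2).
Proof.
  unfold norm2; simpl.
  assert (HA: 0 <= a1 * (a1 * 1) + a2 * (a2 * 1)) by nra.
  rewrite <- (sqrt_mult_alt _ _ HA).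
  destruct (Rle_dec (a1*b1+a2*b2) 0).
  - pose proof (sqrt_pos ((a1 * (a1 * 1) + a2 * (a2 * 1)) * (b1 * (b1 * 1) + b2 * (b2 * 1)))). lra.
  - assert (Hd: 0 <= a1*b1+a2*b2) by lra.
    rewrite <- (sqrt_square (a1*b1+a2*b2) Hd).
    apply sqrt_le_1_alt. pose proof (pow2_ge_0 (a1*b2 - a2*b1)). nra.
Qed.

Lemma norm2_tri x y : norm2 (vadd x y) <= norm2 x + norm2 y.
Proof.
  destruct x as [a1 a2], y as [b1 b2].
  pose proof (dot_le a1 a2 b1 b2).
  pose proof (norm2_ge0 (a1,a2)). pose proof (norm2_ge0 (b1,b2)).
  unfold vadd; simpl.
  unfold norm2 at 1; simpl. apply sqrt_le_sq; [lra|].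
  assert (E1: norm2 (a1,a2) ^ 2 = a1^2 + a2^2) by (unfold norm2; rewrite pow2_sqrt; simpl; [ring|nra]).
  assert (E2: norm2 (b1,b2) ^ 2 = b1^2 + b2^2) by (unfold norm2; rewrite pow2_sqrt; simpl; [ring|nra]).
  nra.
Qed.

Lemma norm2_sub_tri x y z : norm2 (vsub x z) <= norm2 (vsub x y) + norm2 (vsub y z).
Proof.
  replace (vsub x z) with (vadd (vsub x y) (vsub y z)).
  apply norm2_tri. destruct x, y, z; unfold vadd, vsub; simpl; f_equal; ring.
Qed.

Lemma norm2_sym x y : norm2 (vsub x y) = norm2 (vsub y x).
Proof. destruct x, y; unfold norm2, vsub; simpl; f_equal; ring. Qed.

Lemma norm2_rev x y : Rabs (norm2 x - norm2 y) <= norm2 (vsub x y).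
Proof.
  assert (forall a, norm2 (vsub a (0,0)) = norm2 a) as H0.
  { intros [a b]; unfold norm2, vsub; simpl; f_equal; ring. }
  pose proof (norm2_sub_tri x y (0,0)). pose proof (norm2_sub_tri y x (0,0)).
  rewrite !H0 in *. rewrite (norm2_sym y x) in *.
  apply Rabs_le; lra.
Qed.

Lemma vec_int_bound (g1 g2 beta : R -> R) (a b V1 V2 Ib : R) :
  a <= b -> is_RInt g1 a b V1 -> is_RInt g2 a b V2 -> is_RInt beta a b Ib ->
  (forall x, a < x < b -> norm2 (g1 x, g2 x) <= beta x) ->
  norm2 (V1, V2) <= Ib.
Proof.
  intros Hab H1 H2 Hb Hp.
  set (n := norm2 (V1,V2)).
  assert (Hn : 0 <= n) by apply norm2_ge0.
  assert (Hn2 : n * n = V1 * V1 + V2 * V2).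
  { unfold n, norm2; simpl. rewrite sqrt_sqrt; nra. }
  assert (HI0 : 0 <= Ib).
  { apply (is_RInt_le (fun _ => 0) beta a b 0 Ib Hab).
    - pose proof (is_RInt_const a b 0). unfold scal in H; simpl in H; unfold mult in H; simpl in H.
      assert (E: (b-a)*0 = 0) by ring. rewrite E in H. exact H.
    - exact Hb.
    - intros x Hx. pose proof (Hp x Hx). pose proof (norm2_ge0 (g1 x, g2 x)). lra. }
  assert (Hk : n * n <= n * Ib).
  { rewrite Hn2.
    apply (is_RInt_le (fun x => V1 * g1 x + V2 * g2 x) (fun x => n * beta x) a b _ _ Hab).
    - apply (is_RInt_plus (fun x => V1 * g1 x) (fun x => V2 * g2 x) a b (V1*V1) (V2*V2)).
      + apply (is_RInt_scal g1 a b V1 V1 H1).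
      + apply (is_RInt_scal g2 a b V2 V2 H2).
    - apply (is_RInt_scal beta a b n Ib Hb).
    - intros x Hx. pose proof (Hp x Hx). pose proof (dot_le V1 V2 (g1 x) (g2 x)).
      fold n in H0. assert (n * norm2 (g1 x, g2 x) <= n * beta x) by (apply Rmult_le_compat_l; auto). unfold n in *. lra. }
  nra.
Qed.

Lemma sumN_gen g K a n : (forall j, (a <= j < a + n)%nat -> g j <= K) ->
  fold_right Rplus 0 (map g (seq a n)) <= INR n * K.
Proof.
  revert a. induction n; intros a H; cbn [seq map fold_right].
  - simpl; lra.
  - assert (g a <= K) by (apply H; lia).
    assert (fold_right Rplus 0 (map g (seq (S a) n)) <= INR n * K) by (apply IHn; intros; apply H; lia).
    rewrite S_INR. lra.
Qed.

Lemma lip_cont g K x : (forall a b, Rabs (g a - g b) <= K * Rabs (a - b)) -> continuous g x.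
Proof.
  intros H. apply continuity_pt_filterlim.
  intros eps Heps. exists (eps / (Rabs K + 1)). split.
  - apply Rdiv_lt_0_compat; [lra| pose proof (Rabs_pos K); lra].
  - intros y [_ Hy]. simpl in *. unfold R_dist in *.
    pose proof (H y x). pose proof (Rabs_pos K). pose proof (Rle_abs K).
    pose proof (Rabs_pos (y - x)).
    assert (Rabs (y-x) * (Rabs K + 1) < eps).
    { apply (Rmult_lt_compat_r (Rabs K + 1)) in Hy; [|lra].
      unfold Rdiv in Hy. rewrite Rmult_assoc, Rinv_l in Hy; lra. }
    nra.
Qed.

Lemma pl_R (x y : R) : plus (opp x) y = y - x.
Proof. unfold plus, opp; simpl. ring. Qed.

Lemma is_RInt_R_sub (f g : R -> R) a b A B :
  is_RInt f a b A -> is_RInt g a b B -> is_RInt (fun y => f y - g y) a b (A - B).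
Proof. intros H1 H2. apply (is_RInt_minus f g a b A B H1 H2). Qed.

Lemma is_RInt_R_lin (f : R -> R) a b A k m :
  is_RInt f a b A -> is_RInt (fun y => k * f y + m) a b (k * A + m * (b - a)).
Proof.
  intros H.
  pose proof (is_RInt_plus _ _ a b _ _ (is_RInt_scal f a b k A H) (is_RInt_const a b m)) as H2.
  replace (k * A + m * (b - a)) with (plus (scal k A) (scal (b - a) m)).
  exact H2.
  unfold plus, scal; simpl; unfold mult; simpl. ring.
Qed.

Lemma sol_lip (G : R -> vec2 -> vec2) e a b B :
  is_solution G e a b -> (forall s, a <= s <= b -> norm2 (G s (e s)) <= B) ->
  forall s1 s2, a <= s1 -> s1 <= s2 -> s2 <= b ->
  norm2 (vsub (e s2) (e s1)) <= B * (s2 - s1).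
Proof.
  intros He HB s1 s2 H1 H2 H3.
  destruct (He s1 ltac:(lra)) as [A1 A2].
  destruct (He s2 ltac:(lra)) as [C1 C2].
  pose proof (is_RInt_Chasles _ _ _ _ _ _ (is_RInt_swap _ _ _ _ A1) C1) as D1.
  pose proof (is_RInt_Chasles _ _ _ _ _ _ (is_RInt_swap _ _ _ _ A2) C2) as D2.
  rewrite pl_R in D1, D2.
  pose proof (is_RInt_const s1 s2 B) as D3.
  unfold scal in D3; simpl in D3; unfold mult in D3; simpl in D3.
  replace (B * (s2 - s1)) with ((s2 - s1) * B) by ring.
  replace (vsub (e s2) (e s1)) with
    (fst (e s2) - fst (e a) - (fst (e s1) - fst (e a)),
     snd (e s2) - snd (e a) - (snd (e s1) - snd (e a))).
  2:{ unfold vsub; f_equal; ring. }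
  apply (vec_int_bound _ _ (fun _ => B) s1 s2 _ _ _ H2 D1 D2 D3).
  intros x Hx. destruct (G x (e x)) as [p q] eqn:Eg.
  specialize (HB x ltac:(lra)). rewrite Eg in HB. exact HB.
Qed.

Definition clampR (a b x : R) := Rmax a (Rmin b x).

Lemma clamp_prop a b x : a <= b -> a <= clampR a b x <= b.
Proof. intros; unfold clampR, Rmax, Rmin; repeat destruct Rle_dec; lra. Qed.
Lemma clamp_id a b x : a <= x <= b -> clampR a b x = x.
Proof. intros; unfold clampR, Rmax, Rmin; repeat destruct Rle_dec; lra. Qed.
Lemma clamp_lip a b x y : a <= b -> Rabs (clampR a b x - clampR a b y) <= Rabs (x - y).
Proof.
  intros; unfold clampR, Rmax, Rmin; repeat destruct Rle_dec;
  unfold Rabs; repeat destruct Rcase_abs; lra.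
Qed.

Theorem lemma2
  (W : vec2 -> Prop) (N : nat)
  (f : vec2 -> (nat -> vec2) -> vec2)
  (M L Lbar : R)
  (hL : 0 < L) (hLbar : 0 < Lbar)
  (hM : forall x xb, W x -> inWN W N xb -> norm2 (f x xb) <= M)
  (hLip : forall x y xb, W x -> W y -> inWN W N xb ->
            norm2 (vsub (f x xb) (f y xb)) <= L * norm2 (vsub x y))
  (hLipbar : forall x xb yb, W x -> inWN W N xb -> inWN W N yb ->
            norm2 (vsub (f x xb) (f x yb)) <= Lbar * stack_norm N (stack_sub xb yb))
  (xdes : vec2)
  (t T : R) (hT : 0 < T)
  (u : R -> vec2) (umax : R)
  (hu_pc : piecewise_continuous u t (t + T))
  (hu_bd : forall s, t <= s <= t + T -> norm2 (u s) <= umax)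
  (Rcell : R) (hR : 0 < Rcell)
  (xb xbhat : R -> nat -> vec2)
  (hxbW : forall s, t <= s <= t + T -> inWN W N (xb s))
  (hxbhatW : forall s, t <= s <= t + T -> inWN W N (xbhat s))
  (hpred : forall s j, t <= s <= t + T -> (j < N)%nat ->
            norm2 (vsub (xb s j) (xbhat s j)) <= 2 * sqrt 3 * Rcell)
  (e ehat : R -> vec2)
  (he : is_solution (fun s z => vadd (f (vadd z xdes) (xb s)) (u s)) e t (t + T))
  (hehat : is_solution (fun s z => vadd (f (vadd z xdes) (xbhat s)) (u s)) ehat t (t + T))
  (hinit : ehat t = e t)
  (heW : forall s, t <= s <= t + T -> W (vadd (e s) xdes))
  (hehatW : forall s, t <= s <= t + T -> W (vadd (ehat s) xdes)) :
  forall s, t <= s <= t + T ->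
    norm2 (vsub (e s) (ehat s)) <=
      Rmin ((2 * sqrt 3 * Rcell * Lbar * INR N / L) * (exp (L * (s - t)) - 1))
           (2 * norm2 (e t) + 2 * (s - t) * (M + umax)).
Proof.
  intros s Hs.
  set (B := M + umax).
  assert (HtT : t <= t <= t + T) by lra.
  assert (HB0 : 0 <= B).
  { pose proof (hM _ _ (heW t HtT) (hxbW t HtT)). pose proof (hu_bd t HtT).
    pose proof (norm2_ge0 (f (vadd (e t) xdes) (xb t))). pose proof (norm2_ge0 (u t)). unfold B; lra. }
  assert (HGe : forall x, t <= x <= t + T ->
     norm2 (vadd (f (vadd (e x) xdes) (xb x)) (u x)) <= B).
  { intros x Hx. eapply Rle_trans; [apply norm2_tri|].
    pose proof (hM _ _ (heW x Hx) (hxbW x Hx)). pose proof (hu_bd x Hx). unfold B; lra. }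
  assert (HGh : forall x, t <= x <= t + T ->
     norm2 (vadd (f (vadd (ehat x) xdes) (xbhat x)) (u x)) <= B).
  { intros x Hx. eapply Rle_trans; [apply norm2_tri|].
    pose proof (hM _ _ (hehatW x Hx) (hxbhatW x Hx)). pose proof (hu_bd x Hx). unfold B; lra. }
  pose proof (sol_lip _ _ _ _ _ he HGe) as Le.
  pose proof (sol_lip _ _ _ _ _ hehat HGh) as Lh.
  assert (Hsecond : norm2 (vsub (e s) (ehat s)) <= 2 * norm2 (e t) + 2 * (s - t) * (M + umax)).
  { assert (Z : forall a, norm2 (vsub a (0,0)) = norm2 a).
    { intros [a1 a2]; unfold norm2, vsub; simpl; f_equal; ring. }
    pose proof (norm2_sub_tri (e s) (0,0) (ehat s)).
    rewrite Z, (norm2_sym (0,0)), Z in H.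
    pose proof (norm2_sub_tri (e s) (e t) (0,0)). rewrite !Z in H0.
    pose proof (norm2_sub_tri (ehat s) (ehat t) (0,0)). rewrite !Z in H1.
    rewrite hinit in H1.
    pose proof (Le t s ltac:(lra) ltac:(lra) ltac:(lra)).
    pose proof (Lh t s ltac:(lra) ltac:(lra) ltac:(lra)).
    rewrite hinit in H3. fold B. lra. }
  set (cl := clampR t (t + T)).
  assert (Hcl : forall x, t <= cl x <= t + T) by (intros; apply clamp_prop; lra).
  assert (Lsym : forall (g : R -> vec2), (forall s1 s2, t <= s1 -> s1 <= s2 -> s2 <= t + T ->
      norm2 (vsub (g s2) (g s1)) <= B * (s2 - s1)) ->
      forall x y, norm2 (vsub (g (cl x)) (g (cl y))) <= B * Rabs (x - y)).
  { intros g Hg x y. pose proof (clamp_lip t (t+T) x y ltac:(lra)). fold cl in H.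
    pose proof (Hcl x). pose proof (Hcl y).
    destruct (Rle_dec (cl x) (cl y)).
    - rewrite norm2_sym. eapply Rle_trans; [apply Hg; lra|].
      rewrite Rabs_minus_sym in H. apply Rmult_le_compat_l; auto.
      eapply Rle_trans; [|exact H]. apply Rle_abs.
    - eapply Rle_trans; [apply Hg; lra|].
      apply Rmult_le_compat_l; auto.
      eapply Rle_trans; [|exact H]. apply Rle_abs. }
  set (Dc := fun x => norm2 (vsub (e (cl x)) (ehat (cl x)))).
  assert (HDcont : forall x, continuous Dc x).
  { intro x. apply (lip_cont Dc (2 * B)). intros a b. unfold Dc.
    eapply Rle_trans; [apply norm2_rev|].
    replace (vsub (vsub (e (cl a)) (ehat (cl a))) (vsub (e (cl b)) (ehat (cl b))))
      with (vadd (vsub (e (cl a)) (e (cl b))) (vsub (ehat (cl b)) (ehat (cl a)))).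
    2:{ unfold vadd, vsub; simpl; f_equal; ring. }
    eapply Rle_trans; [apply norm2_tri|].
    pose proof (Lsym e Le a b). pose proof (Lsym ehat Lh b a).
    rewrite Rabs_minus_sym in H0. lra. }
  set (c := 2 * sqrt 3 * Rcell * Lbar * INR N).
  assert (Hc0 : 0 <= c).
  { unfold c. pose proof (pos_INR N). pose proof (sqrt_pos 3).
    apply Rmult_le_pos; [|lra]. apply Rmult_le_pos; [|lra]. nra. }
  set (I := fun x => RInt Dc t x).
  assert (HIc : forall x, is_RInt Dc t x (I x)).
  { intro x. unfold I. apply (RInt_correct Dc t x). apply ex_RInt_continuous. intros; apply HDcont. }
  assert (HId : forall x, is_derive I x (Dc x)).
  { intro x. apply (is_derive_RInt Dc I t x); [|apply HDcont]. apply filter_forall. intros; apply HIc. }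
  assert (HK : forall x, t <= x <= t + T -> Dc x <= L * I x + c * (x - t)).
  { intros x Hx.
    assert (Ex : Dc x = norm2 (vsub (e x) (ehat x))).
    { unfold Dc, cl. rewrite clamp_id by lra. reflexivity. }
    rewrite Ex.
    destruct (he x Hx) as [A1 A2]. destruct (hehat x Hx) as [C1 C2].
    pose proof (is_RInt_R_sub _ _ _ _ _ _ A1 C1) as D1.
    pose proof (is_RInt_R_sub _ _ _ _ _ _ A2 C2) as D2.
    pose proof (is_RInt_R_lin _ _ _ _ L c (HIc x)) as D3.
    replace (vsub (e x) (ehat x)) with
      (fst (e x) - fst (e t) - (fst (ehat x) - fst (ehat t)),
       snd (e x) - snd (e t) - (snd (ehat x) - snd (ehat t))).
    2:{ rewrite hinit. unfold vsub; f_equal; ring. }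
    apply (vec_int_bound _ _ _ t x _ _ _ ltac:(lra) D1 D2 D3).
    intros y Hy. assert (Hy' : t <= y <= t + T) by lra.
    set (E1 := vadd (e y) xdes). set (E2 := vadd (ehat y) xdes).
    replace (fst (vadd (f E1 (xb y)) (u y)) - fst (vadd (f E2 (xbhat y)) (u y)),
             snd (vadd (f E1 (xb y)) (u y)) - snd (vadd (f E2 (xbhat y)) (u y)))
      with (vsub (f E1 (xb y)) (f E2 (xbhat y))).
    2:{ unfold vsub, vadd; simpl; f_equal; ring. }
    eapply Rle_trans; [apply (norm2_sub_tri _ (f E2 (xb y)))|].
    assert (P1 : norm2 (vsub (f E1 (xb y)) (f E2 (xb y))) <= L * Dc y).
    { eapply Rle_trans; [apply hLip; [apply heW | apply hehatW | apply hxbW]; lra|].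
      unfold Dc, cl; cbv beta. rewrite clamp_id by lra.
      replace (vsub E1 E2) with (vsub (e y) (ehat y)); [lra|].
      unfold E1, E2, vsub, vadd; simpl; f_equal; ring. }
    assert (P2 : norm2 (vsub (f E2 (xb y)) (f E2 (xbhat y))) <= c).
    { eapply Rle_trans; [apply hLipbar; [apply hehatW | apply hxbW | apply hxbhatW]; lra|].
      set (K := 2 * sqrt 3 * Rcell).
      assert (HK0 : 0 <= K) by (unfold K; pose proof (sqrt_pos 3); nra).
      assert (St : stack_norm N (stack_sub (xb y) (xbhat y)) <= INR N * K).
      { unfold stack_norm. apply sqrt_le_sq. pose proof (pos_INR N); nra.
        eapply Rle_trans.
        - unfold sumN. apply (sumN_gen _ (K ^ 2)).
          intros j Hj. unfold stack_sub.
          pose proof (hpred y j Hy' ltac:(lia)). fold K in H.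
          pose proof (norm2_ge0 (vsub (xb y j) (xbhat y j))). nra.
        - destruct N as [|N']; [simpl; nra|].
          assert (1 <= INR (S N')) by (apply (le_INR 1); lia). nra. }
      unfold c. fold K. nra. }
    lra. }
  (* Gronwall via MVT *)
  set (Psi := fun x => exp (-L * (x - t)) * (I x + c * ((x - t) / L + 1 / (L * L)))).
  assert (HPd : forall x, is_derive Psi x (exp (-L * (x - t)) * (Dc x - L * I x - c * (x - t)))).
  { intro x. unfold Psi. auto_derive.
    - exists (Dc x). apply HId.
    - replace (Derive (fun x0 : R => I x0) x) with (Dc x) by (symmetry; apply is_derive_unique; apply HId). unfold Rminus. generalize (exp (- L * (x + - t))) (I x) (Dc x) (x + - t); intros. field. lra. }
  destruct (MVT_gen Psi t s (fun x => exp (-L * (x - t)) * (Dc x - L * I x - c * (x - t)))) as [xi [Hxi Hmvt]].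
  { intros; apply HPd. }
  { intros x _; apply continuity_pt_filterlim. apply (ex_derive_continuous (K:=R_AbsRing) (V:=R_NormedModule) Psi x). eexists; apply HPd. }
  rewrite Rmin_left in Hxi by lra. rewrite Rmax_right in Hxi by lra.
  assert (Hneg : exp (-L * (xi - t)) * (Dc xi - L * I xi - c * (xi - t)) <= 0).
  { pose proof (exp_pos (-L * (xi - t))). pose proof (HK xi ltac:(lra)). nra. }
  assert (HPt : Psi t = c / (L * L)).
  { unfold Psi, I. rewrite RInt_point. replace (-L * (t - t)) with 0 by ring. rewrite exp_0.
    unfold zero; simpl. field. lra. }
  assert (HPs : Psi s <= c / (L * L)) by nra.
  unfold Psi in HPs.
  set (Ex := exp (L * (s - t))).
  assert (HEx : exp (-L * (s - t)) * Ex = 1).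
  { unfold Ex. rewrite <- exp_plus. replace (-L * (s - t) + L * (s - t)) with 0 by ring. apply exp_0. }
  assert (HEx0 : 0 < Ex) by apply exp_pos.
  assert (H1 : I s + c * ((s - t) / L + 1 / (L * L)) <= Ex * (c / (L * L))).
  { apply (Rmult_le_compat_l Ex) in HPs; [|lra].
    rewrite <- Rmult_assoc, (Rmult_comm Ex), HEx, Rmult_1_l in HPs. exact HPs. }
  assert (H2 : L * I s + c * (s - t) <= c / L * (Ex - 1)).
  { apply (Rmult_le_compat_l L) in H1; [|lra].
    replace (L * (I s + c * ((s - t) / L + 1 / (L * L)))) with (L * I s + c * (s - t) + c / L) in H1 by (field; lra).
    replace (L * (Ex * (c / (L * L)))) with (c / L * Ex) in H1 by (field; lra).
    replace (c / L * (Ex - 1)) with (c / L * Ex - c / L) by ring. lra. }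
  pose proof (HK s Hs) as H3.
  assert (Es : Dc s = norm2 (vsub (e s) (ehat s))).
  { unfold Dc, cl. rewrite clamp_id by lra. reflexivity. }
  apply Rmin_glb; [|exact Hsecond].
  fold c. lra.
Qed.
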